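(* Let $U$ be a finite set of cardinality $n\ge1$. There is a bijection between the set $(C\circ\mathcal P)^\bullet[U]$ and the set of pairs $(\mathcal X,\lambda)$ where $\mathcal X$ is an $n$-periodic Ptolemy diagram of the $\infty$-gon all of whose arcs have length at most $n$, and $\lambda$ is a bijection from the set $\mathbb Z/n\mathbb Z$ of residue classes of vertices of the $\infty$-gon modulo $n$ to $U$.
   Context: An arc of the $\infty$-gon is a pair $(i,j)$ of integers with $j-i\ge2$, of length $j-i$; the vertices of the $\infty$-gon are the integers. A collection of arcs is $n$-periodic if it is closed under $(i,j)\mapsto(i+tn,j+tn)$, $t\in\mathbb Z$. Two arcs $(i,j),(k,l)$ cross if $i<k<j<l$ or $k<i<l<j$. A Ptolemy diagram of the $\infty$-gon is a collection $\mathcal X$ of arcs such that whenever $(i,j),(r,s)\in\mathcal X$ cross with $i<r$, each of $(i,r),(i,s),(r,j),(j,s)$ which is an arc lies in $\mathcal X$. For $N\ge 3$, a Ptolemy diagram of a convex $N$-gon is a set of diagonals such that whenever two diagonals in it cross, all diagonals among their four endpoints belong to it. A Ptolemy diagram with distinguished base edge on the $(N+1)$-gon, $N\ge1$, is a Ptolemy diagram of the $(N+1)$-gon together with a chosen edge (for $N=1$: the degenerate diagram consisting of two vertices and one edge); the base vertex is the first vertex of the base edge going counterclockwise. For a finite set $V$ with $|V|=N$, $\mathcal P[V]$ is the set of Ptolemy diagrams with distinguished base edge on the $(N+1)$-gon whose non-base vertices are labelled bijectively by $V$. $(C\circ\mathcal P)[U]$ is the set of cyclically ordered tuples $(P_1,\dots,P_r)$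 (up to cyclic rotation) where $U=V_1\sqcup\dots\sqcup V_r$ is a set partition into nonempty blocks and $P_s\in\mathcal P[V_s]$. The pointed version $(C\circ\mathcal P)^\bullet[U]$ is the set of pairs $(\gamma,u)$ with $\gamma\in(C\circ\mathcal P)[U]$ and $u\in U$. *)

(* Defs.v *)
From HB Require Import structures.
From Stdlib Require List.
From mathcomp Require Import all_boot all_order all_algebra.
Set Implicit Arguments. Unset Strict Implicit. Unset Printing Implicit Defensive.
Import Order.TTheory GRing.Theory Num.Theory.

(* The (N+1)-gon has vertices 0,1,...,N in counterclockwise order; vertex 0 is
   the base vertex and the base edge is {0,1}.  The non-base vertices 1..N carry
   the labels.  Edges are {k,k+1} and {0,N}; a diagonal is written (x,y), x<y. *)
Definition is_diag (N x y : nat) : bool :=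
  [&& x < y, x.+2 <= y & ~~ ((x == 0) && (y == N))].

Definition crossn (a b c d : nat) : bool :=
  [&& a < c, c < b & b < d] || [&& c < a, a < d & d < b].

Definition ptolemy_poly (N : nat) (D : {set 'I_N.+1 * 'I_N.+1}) : Prop :=
  (forall p, p \in D -> is_diag N p.1 p.2) /\
  (forall p q, p \in D -> q \in D -> crossn p.1 p.2 q.1 q.2 ->
     forall x y : 'I_N.+1,
       x \in [:: p.1; p.2; q.1; q.2] -> y \in [:: p.1; p.2; q.1; q.2] ->
       is_diag N x y -> (x, y) \in D).

(* A block (V, P) with P in P[V]: N = |V| >= 1, the labels of vertices 1..N
   (a duplicate-free N-tuple whose underlying set is V), and the diagram. *)
Record PBlock (U : finType) := PBlockMk {
  pb_size : nat;
  pb_lab : pb_size.-tuple U;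
  pb_diag : {set 'I_pb_size.+1 * 'I_pb_size.+1} }.

Definition pblock_valid (U : finType) (b : PBlock U) : Prop :=
  [/\ 0 < pb_size b, uniq (pb_lab b) & ptolemy_poly (pb_diag b)].

(* Representatives of (C o P)^bullet[U]: a sequence of blocks (the cyclic order)
   whose label sets partition U, together with a point u in U. *)
Definition cp_valid (U : finType) (c : seq (PBlock U) * U) : Prop :=
  (forall b, List.In b c.1 -> pblock_valid b) /\
  perm_eq (flatten [seq val (pb_lab b) | b <- c.1]) (enum U).

Definition CPrep (U : finType) := {c : seq (PBlock U) * U | cp_valid c}.

(* Two representatives define the same element of (C o P)^bullet[U] iff they
   have the same point and the cyclic tuples differ by a rotation. *)
Definition cp_equiv (U : finType) (x y : CPrep U) : Prop :=
  (proj1_sig x).2 = (proj1_sig y).2 /\ exists k, rot k (proj1_sig x).1 = (proj1_sig y).1.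

Local Open Scope ring_scope.

Definition is_arc (i j : int) : bool := 2 <= j - i.

Definition crossz (i j k l : int) : bool :=
  [&& i < k, k < j & j < l] || [&& k < i, i < l & l < j].

Definition arc_collection (X : int -> int -> bool) : Prop :=
  forall i j, X i j -> is_arc i j.

Definition ptolemy_inf (X : int -> int -> bool) : Prop :=
  arc_collection X /\
  (forall i j r s, X i j -> X r s -> crossz i j r s -> i < r ->
     [/\ is_arc i r -> X i r, is_arc i s -> X i s,
         is_arc r j -> X r j & is_arc j s -> X j s]).

Definition periodic (n : nat) (X : int -> int -> bool) : Prop :=
  forall i j t : int, X (i + t * n%:Z) (j + t * n%:Z) = X i j.

Definition arcs_bounded (n : nat) (X : int -> int -> bool) : Prop :=
  forall i j, X i j -> j - i <= n%:Z.

Definition InfDiagram (n : nat) :=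
  {X : int -> int -> bool | [/\ ptolemy_inf X, periodic n X & arcs_bounded n X]}.

(* Residue classes Z/nZ are represented by 'I_n (class of i is i mod n). *)
Definition ResLabelling (U : finType) (n : nat) :=
  {f : {ffun 'I_n -> U} | bijective f}.

(* Main.v *)
From HB Require Import structures.
Require Import Defs.
From mathcomp Require Import all_boot all_order all_algebra.
From mathcomp Require Import zify.
From Stdlib Require Import ClassicalEpsilon ProofIrrelevance Classical_Prop FunctionalExtensionality.
Set Implicit Arguments. Unset Strict Implicit. Unset Printing Implicit Defensive.
Import Order.TTheory GRing.Theory Num.Theory.

Section Lin.
Variable U : finType.
Implicit Types (s : seq (PBlock U)) (Y : nat -> nat -> bool) (lab : nat -> U).

Definition dgb (b : PBlock U) (x y : nat) : bool :=
  [exists p in pb_diag b, (nat_of_ord p.1 == x) && (nat_of_ord p.2 == y)].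

Fixpoint Xlin s (a b : nat) : bool :=
  if s is blk :: s' then
    [&& a < b, b <= pb_size blk & dgb blk a b || [&& a == 0, b == pb_size blk & 1 < pb_size blk]]
    || ((pb_size blk <= a) && Xlin s' (a - pb_size blk) (b - pb_size blk))
  else false.

Definition sz s := sumn [seq pb_size b | b <- s].

Definition cutY Y W v := [forall a : 'I_v, forall b : 'I_W.+1, (v < b) ==> ~~ Y a b].

Lemma cutYP Y W v : reflect (forall a b, a < v -> v < b -> b <= W -> ~~ Y a b) (cutY Y W v).
Proof.
apply: (iffP idP).
- move=> /forallP H a b ha hb hW. have := H (Ordinal ha) => /forallP /(_ (Ordinal (hW : b < W.+1))).
  by rewrite /= hb.
- move=> H; apply/forallP => a; apply/forallP => b; apply/implyP => hb.
  by apply: H => //; rewrite -ltnS.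
Qed.

Lemma notcutY Y W v : ~~ cutY Y W v -> exists a b, [/\ a < v, v < b, b <= W & Y a b].
Proof.
move/forallPn => [a /forallPn [b]]; rewrite negb_imply negbK => /andP[hb hY].
by exists a, b; split => //; rewrite -ltnS.
Qed.

Definition nextcut Y W := (find (fun i => cutY Y W i.+1) (iota 0 W)).+1.

Lemma cutY_W Y W : cutY Y W W.
Proof. by apply/cutYP => a b _ h1 h2; move: (leq_ltn_trans h2 h1); rewrite ltnn. Qed.

Lemma nextcut_props Y W : 0 < W ->
  [/\ 0 < nextcut Y W, nextcut Y W <= W, cutY Y W (nextcut Y W) &
      forall v, 0 < v -> v < nextcut Y W -> ~~ cutY Y W v].
Proof.
move=> W0.
have hh : has (fun i => cutY Y W i.+1) (iota 0 W).
  apply/hasP; exists W.-1; first by rewrite mem_iota add0n; lia.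
  by rewrite prednK //; apply: cutY_W.
have hf : find (fun i => cutY Y W i.+1) (iota 0 W) < W.
  by move: hh; rewrite has_find size_iota.
split => //.
- have := nth_find 0 hh. by rewrite nth_iota.
- move=> v v0 vlt. rewrite /nextcut in vlt.
  have hv : v.-1 < find (fun i => cutY Y W i.+1) (iota 0 W) by lia.
  have := before_find 0 hv.
  rewrite nth_iota; last by lia.
  by rewrite add0n prednK // => ->.
Qed.

Lemma nextcut_unique Y W m : 0 < m -> m <= W -> cutY Y W m ->
  (forall v, 0 < v -> v < m -> ~~ cutY Y W v) -> nextcut Y W = m.
Proof.
move=> m0 mW cm hm.
have [h1 h2 h3 h4] := nextcut_props Y (leq_trans m0 mW).
case: (ltngtP (nextcut Y W) m) => // h.
- by move: (hm _ h1 h); rewrite h3.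
- by move: (h4 _ m0 h); rewrite cm.
Qed.

Definition shY Y k := fun a b => Y (a + k) (b + k).
Definition shL lab k := fun i => lab (i + k).

Definition tile Y lab k : PBlock U :=
  @PBlockMk U k (@Tuple k U (mkseq lab k) (introT eqP (size_mkseq lab k)))
    [set p : 'I_k.+1 * 'I_k.+1 | is_diag k p.1 p.2 && Y p.1 p.2].

Fixpoint bfl (fuel : nat) Y lab W : seq (PBlock U) :=
  if fuel is f.+1 then
    if W is 0 then [::] else
    tile Y lab (nextcut Y W) :: bfl f (shY Y (nextcut Y W)) (shL lab (nextcut Y W)) (W - nextcut Y W)
  else [::].

Definition BF Y lab W := bfl W Y lab W.

Lemma bfl_fuel f1 f2 Y lab W : W <= f1 -> W <= f2 -> bfl f1 Y lab W = bfl f2 Y lab W.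
Proof.
elim: f1 f2 Y lab W => [|f1 IH] [|f2] Y lab W /=; try by case: W.
case: W => // W h1 h2. have [k0 _ _ _] := nextcut_props Y (ltn0Sn W).
congr cons; apply: IH; lia.
Qed.

Lemma BF_unfold Y lab W : 0 < W ->
  BF Y lab W = tile Y lab (nextcut Y W) :: BF (shY Y (nextcut Y W)) (shL lab (nextcut Y W)) (W - nextcut Y W).
Proof.
rewrite /BF; case: W => // W _ /=; congr cons; apply: bfl_fuel => //.
have [k0 _ _ _] := nextcut_props Y (ltn0Sn W); lia.
Qed.

Lemma BF0 Y lab : BF Y lab 0 = [::].
Proof. by []. Qed.

Lemma cutY_ext Y Y' W v : (forall a b, a < b <= W -> Y a b = Y' a b) -> cutY Y W v = cutY Y' W v.
Proof.
move=> H; apply/cutYP/cutYP => HH a b h1 h2 h3.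
- by rewrite -H ?HH //; lia.
- by rewrite H ?HH //; lia.
Qed.

Lemma nextcut_ext Y Y' W : (forall a b, a < b <= W -> Y a b = Y' a b) -> nextcut Y W = nextcut Y' W.
Proof.
move=> H; rewrite /nextcut; congr S; apply: eq_in_find => i _; exact: cutY_ext.
Qed.

Lemma tile_ext Y Y' lab lab' k : (forall x y, x < y <= k -> Y x y = Y' x y) ->
  (forall i, i < k -> lab i = lab' i) -> tile Y lab k = tile Y' lab' k.
Proof.
move=> HY HL; rewrite /tile.
have E1 : mkseq lab k = mkseq lab' k by apply/eq_in_map => i; rewrite mem_iota => /andP[_ h]; apply: HL.
have E2 : [set p : 'I_k.+1 * 'I_k.+1 | is_diag k p.1 p.2 && Y p.1 p.2] =
          [set p : 'I_k.+1 * 'I_k.+1 | is_diag k p.1 p.2 && Y' p.1 p.2].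
  apply/setP => -[x y]; rewrite !inE /=; case hd: (is_diag k x y) => //=.
  apply: HY; move: hd; rewrite /is_diag => /andP[-> _] /=; rewrite -ltnS; exact: ltn_ord.
rewrite E2; congr PBlockMk; exact: val_inj.
Qed.

Lemma bfl_ext f Y Y' lab lab' W : W <= f -> (forall a b, a < b <= W -> Y a b = Y' a b) ->
  (forall i, i < W -> lab i = lab' i) -> bfl f Y lab W = bfl f Y' lab' W.
Proof.
elim: f Y Y' lab lab' W => [|f IH] Y Y' lab lab' W hW HY HL /=; first by [].
case: W hW HY HL => // W hW HY HL.
rewrite (nextcut_ext HY).
have [k0 kW _ _] := nextcut_props Y' (ltn0Sn W).
congr cons.
- apply: tile_ext => [x y h|i h]; [apply: HY|apply: HL]; lia.
- apply: IH => [|a b h|i h]; rewrite /shY /shL; [lia|apply: HY|apply: HL]; lia.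
Qed.

Lemma BF_ext Y Y' lab lab' W : (forall a b, a < b <= W -> Y a b = Y' a b) ->
  (forall i, i < W -> lab i = lab' i) -> BF Y lab W = BF Y' lab' W.
Proof. by move=> *; apply: bfl_ext. Qed.

Lemma cutY_restr Y W w v : w <= W -> cutY Y W v -> cutY Y w v.
Proof. move=> hw /cutYP H; apply/cutYP => a b h1 h2 h3; apply: H => //; lia. Qed.

Lemma nextcut_restr Y W w : 0 < w -> w <= W -> cutY Y W w -> nextcut Y w = nextcut Y W.
Proof.
move=> w0 wW cw.
have [k0 kW ck hk] := nextcut_props Y (leq_trans w0 wW).
have kw : nextcut Y W <= w.
  rewrite leqNgt; apply/negP => h; by move: (hk _ w0 h); rewrite cw.
apply: nextcut_unique => //; first exact: cutY_restr ck.
move=> v v0 vk; have := hk _ v0 vk => /notcutY [a [b [h1 h2 h3 h4]]].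
apply/negP => /cutYP H.
case: (leqP b w) => hb; first by move: (H a b h1 h2 hb); rewrite h4.
move/cutYP: cw => /(_ a b) C; suff : ~~ Y a b by rewrite h4.
by apply: C; lia.
Qed.

Lemma cutY0 Y W : cutY Y W 0.
Proof. by apply/cutYP. Qed.

Lemma BF_split W w Y lab : w <= W -> cutY Y W w ->
  BF Y lab W = BF Y lab w ++ BF (shY Y w) (shL lab w) (W - w).
Proof.
move: {2}W (leqnn W) => m hm; elim: m W hm w Y lab => [|m IH] W hm w Y lab hw cw.
  have -> : W = 0 by lia. have -> : w = 0 by lia. by [].
case: (posnP w) => w0.
  subst w; rewrite BF0 /= subn0; apply: BF_ext => [a b h|i h]; by rewrite /shY /shL !addn0.
rewrite (BF_unfold _ _ (leq_trans w0 hw)) (BF_unfold _ _ w0) (nextcut_restr w0 hw cw) /=.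
have [k0 kW ck hk] := nextcut_props Y (leq_trans w0 hw).
have kw : nextcut Y W <= w.
  rewrite leqNgt; apply/negP => h; by move: (hk _ w0 h); rewrite cw.
set k := nextcut Y W in k0 kW ck hk kw *.
congr cons.
rewrite (IH (W - k) _ (w - k)); first last.
- apply/cutYP => a b h1 h2 h3; rewrite /shY; move/cutYP: cw; apply; lia.
- lia.
- lia.
congr cat; have -> : W - k - (w - k) = W - w by lia.
apply: BF_ext => [a b h|i h]; rewrite /shY /shL; by rewrite -!addnA subnK.
Qed.

Lemma dgb_tile Y lab k a b : a <= k -> b <= k -> dgb (tile Y lab k) a b = is_diag k a b && Y a b.
Proof.
move=> ha hb; apply/existsP/idP.
- by move=> [p /andP[]]; rewrite inE => /andP[h1 h2] /andP[/eqP e1 /eqP e2]; rewrite -e1 -e2 h1 h2.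
- move=> h; exists (inord a, inord b); rewrite inE /= !inordK //; by rewrite !eqxx h.
Qed.

Definition lin_arc Y W := forall a b, a < b <= W -> Y a b -> a.+1 < b.
Definition lin_pt Y (W : nat) := forall i r j l : nat, i < r -> r < j -> j < l -> l <= W -> Y i j -> Y r l ->
  forall x y, x \in [:: i; j; r; l] -> y \in [:: i; j; r; l] -> x.+1 < y -> Y x y.

Lemma four_pts (P : nat -> nat -> Prop) (i r j l : nat) : i < r -> r < j -> j < l ->
  P i j -> P r l -> (i.+1 < r -> P i r) -> P i l -> (r.+1 < j -> P r j) -> (j.+1 < l -> P j l) ->
  forall x y, x \in [:: i; j; r; l] -> y \in [:: i; j; r; l] -> x.+1 < y -> P x y.
Proof.
move=> h1 h2 h3 p1 p2 p3 p4 p5 p6 x y; rewrite !inE.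
move=> /or4P [] /eqP -> /or4P [] /eqP -> h; try (exfalso; lia); auto.
Qed.

Lemma lin_sh Y W k : k <= W -> lin_arc Y W -> lin_pt Y W -> lin_arc (shY Y k) (W - k) /\ lin_pt (shY Y k) (W - k).
Proof.
move=> kW ha hp; split.
- move=> a b h; rewrite /shY => /ha; lia.
- move=> i r j l h1 h2 h3 h4 y1 y2 x y hx hy hxy; rewrite /shY.
  apply: (hp (i + k) (r + k) (j + k) (l + k)) => //; try lia.
  + exact: (map_f (addn^~ k) hx).
  + exact: (map_f (addn^~ k) hy).
Qed.

Lemma closing W Y : lin_arc Y W -> lin_pt Y W -> 0 < W -> 1 < nextcut Y W -> Y 0 (nextcut Y W).
Proof.
move=> ha hp W0 k1.
have [k0 kW ck hk] := nextcut_props Y W0.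
set k := nextcut Y W in k0 kW ck hk k1 *.
have [a [b [h1 h2 h3 h4]]] := notcutY (hk 1 isT k1).
have a0 : a = 0 by lia. subst a.
have bk : b <= k.
  rewrite leqNgt; apply/negP => h; move/cutYP: ck => /(_ 0 b k0 h h3); by rewrite h4.
move: {2}(k - b) (leqnn (k - b)) => m; elim: m b h2 h3 h4 bk => [|m IH] q h2 h3 h4 bk hm.
  by have -> : k = q by lia.
case: (ltngtP q k) => hq; last by rewrite hq in h4.
- have /notcutY [p' [q' [e1 e2 e3 e4]]] := hk q (ltnW h2) hq.
  have q'k : q' <= k.
    rewrite leqNgt; apply/negP => h; move/cutYP: ck => /(_ p' q' (ltn_trans e1 hq) h e3); by rewrite e4.
  case: (posnP p') => hp'.
  + subst p'; apply: (IH q') => //; lia.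
  + apply: (IH q') => //; try lia.
    apply: (hp 0 p' q q') => //; rewrite ?inE ?eqxx ?orbT //; lia.
- lia.
Qed.

Lemma BF_Xlin W Y lab : lin_arc Y W -> lin_pt Y W -> forall a b, a < b <= W -> Xlin (BF Y lab W) a b = Y a b.
Proof.
move: {2}W (leqnn W) => m hm; elim: m W hm Y lab => [|m IH] W hm Y lab ha hp a b hab; first by lia.
have W0 : 0 < W by lia.
rewrite BF_unfold //=.
have [k0 kW ck hk] := nextcut_props Y W0.
set k := nextcut Y W in k0 kW ck hk *.
case: (leqP b k) => hbk.
- have -> : (k <= a) = false by apply/negbTE; rewrite -ltnNge; lia.
  rewrite andFb orbF dgb_tile //; last lia.
  have hab' := hab; case/andP: hab' => hab1 _; rewrite hab1 /=.
  case hd : (is_diag k a b) => /=.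
    case: (Y a b) => /=; first by []; move: hd; rewrite /is_diag => /and3P[_ _]; by case: (a == 0); case: (b == k).
  case: (boolP ((a == 0) && (b == k))) => [/andP[/eqP -> /eqP ->]|hn] /=.
    rewrite eqxx; case: (ltnP 1 k) => h1 /=; first by rewrite closing.
    apply/esym/negbTE/negP => hy; have := ha 0 k _ hy; rewrite k0 kW => /(_ isT); lia.
  rewrite andbA (negbTE hn) /=; apply/esym/negbTE/negP => hy.
  have := ha a b hab hy => hab2; move: hd; rewrite /is_diag.
  rewrite hab1 hab2 /= => /negbFE; by rewrite (negbTE hn).
-
  rewrite andFb andbF /=; case: (leqP k a) => hka /=.
  + have [ha' hp'] := lin_sh kW ha hp.
    rewrite IH //; [by rewrite /shY !subnK //; lia|lia|lia].
  + apply/esym/negbTE; move/cutYP: ck; apply => //; lia.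
Qed.

Definition labs s := flatten [seq val (pb_lab b) | b <- s].

Lemma sz_labs s : sz s = size (labs s).
Proof. elim: s => //= b s IH; rewrite size_cat size_tuple; congr addn; exact: IH. Qed.

Lemma szC b s : sz (b :: s) = pb_size b + sz s.
Proof. by []. Qed.

Lemma Xlin_bound s a b : Xlin s a b -> a < b <= sz s.
Proof.
elim: s a b => // blk s IH a b; rewrite szC /= => /orP[/and3P[h1 h2 _]|/andP[h1 /IH]].
- by rewrite h1 /= (leq_trans h2) // leq_addr.
- lia.
Qed.

Lemma Xlin_cat s1 s2 a b : Xlin (s1 ++ s2) a b = Xlin s1 a b || (sz s1 <= a) && Xlin s2 (a - sz s1) (b - sz s1).
Proof.
elim: s1 a b => [|blk s1 IH] a b /=; first by rewrite !subn0.
rewrite IH -orbA; congr orb.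
rewrite szC; case: (leqP (pb_size blk) a) => h /=.
  congr orb; rewrite !subnDA; congr andb; lia.
have -> : (pb_size blk + sz s1 <= a) = false by apply/negbTE; rewrite -ltnNge; lia.
by [].
Qed.

Definition bv (b : PBlock U) := 0 < pb_size b /\ ptolemy_poly (pb_diag b).

Lemma dgbP (b : PBlock U) (x y : 'I_(pb_size b).+1) : dgb b x y = ((x, y) \in pb_diag b).
Proof.
apply/existsP/idP => [[p /andP[pin /andP[/eqP e1 /eqP e2]]]|h]; last by exists (x, y); rewrite h !eqxx.
have -> : (x, y) = p by case: p pin e1 e2 => p1 p2 /= _ e1 e2; congr pair; apply: val_inj.
exact: pin.
Qed.

Lemma dgb_diag (b : PBlock U) x y : ptolemy_poly (pb_diag b) -> dgb b x y -> is_diag (pb_size b) x y.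
Proof.
move=> [H1 _] /existsP [p /and3P[pin /eqP e1 /eqP e2]]; subst x y; exact: (H1 p pin).
Qed.

Lemma dgb_le (b : PBlock U) x y : dgb b x y -> x <= pb_size b /\ y <= pb_size b.
Proof.
move=> /existsP [p /and3P[_ /eqP e1 /eqP e2]]; subst x y; split; rewrite -ltnS; exact: ltn_ord.
Qed.

Lemma block_pt (b : PBlock U) i r j l x y : ptolemy_poly (pb_diag b) -> i < r -> r < j -> j < l ->
  dgb b i j -> dgb b r l -> x \in [:: i; j; r; l] -> y \in [:: i; j; r; l] ->
  is_diag (pb_size b) x y -> dgb b x y.
Proof.
move=> [_ H2] h1 h2 h3 /existsP [p /andP[pin /andP[/eqP ep1 /eqP ep2]]]
  /existsP [q /andP[qin /andP[/eqP eq1 /eqP eq2]]].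
subst i j r l => hx hy hd.
have: x \in map val [:: p.1; p.2; q.1; q.2] by [].
case/mapP => X hX ex; subst x.
have: y \in map val [:: p.1; p.2; q.1; q.2] by [].
case/mapP => Y hY eY; subst y.
rewrite dgbP; apply: (H2 p q) => //.
by rewrite /crossn h1 h2 h3.
Qed.

Lemma Xlin_arc s a b : (forall b, List.In b s -> bv b) -> Xlin s a b -> a.+1 < b.
Proof.
elim: s a b => //= blk s IH a b hv /orP[/and3P[h1 h2 /orP[/(dgb_diag (proj2 (hv _ (or_introl erefl))))|/and3P[/eqP -> /eqP -> h]]]|/andP[h1 /IH]].
- by rewrite /is_diag => /and3P[].
- by [].
- move=> H; have := H (fun b hb => hv b (or_intror hb)); lia.
Qed.

Lemma mem4_ge k i j r l x : k <= i -> i <= j -> i <= r -> i <= l -> x \in [:: i; j; r; l] -> k <= x.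
Proof. move=> h1 h2 h3 h4; rewrite !inE => /or4P[] /eqP ->; lia. Qed.

Lemma Xlin_pt s W : (forall b, List.In b s -> bv b) -> lin_pt (Xlin s) W.
Proof.
elim: s W => [|blk s IH] W hv i r j l h1 h2 h3 h4 //=.
have [k0 hpt] := hv _ (or_introl erefl).
have hv' : forall b, List.In b s -> bv b by move=> b hb; apply: hv; right.
set k := pb_size blk in k0 *.
move=> /orP[/and3P[_ hjk hij]|/andP[hki hij]] /orP[/and3P[_ hlk hrl]|/andP[hkr hrl]] x y hx hy hxy.
- have xk : x <= k by move: hx; rewrite !inE => /or4P[] /eqP ->; lia.
  have yk : y <= k by move: hy; rewrite !inE => /or4P[] /eqP ->; lia.
  have dij : dgb blk i j by case/orP: hij => // /and3P[_ /eqP]; lia.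
  have drl : dgb blk r l by case/orP: hrl => // /and3P[/eqP]; lia.
  apply/orP; left; rewrite yk (_ : x < y) /=; last lia.
  case hd: (is_diag k x y); first by rewrite (block_pt hpt h1 h2 h3 dij drl hx hy hd).
  move: hd; rewrite /is_diag; have -> : x < y by lia. have -> : x.+2 <= y by lia.
  rewrite /= => /negbFE /andP[/eqP -> /eqP ->]; rewrite !eqxx /=; lia.
- lia.
- lia.
- have xk : k <= x by move: hx; rewrite !inE => /or4P[] /eqP ->; lia.
  have yk : k <= y by move: hy; rewrite !inE => /or4P[] /eqP ->; lia.
  apply/orP; right; rewrite xk /=.
  apply: (IH W hv' (i - k) (r - k) (j - k) (l - k)) => //; try lia.
  + exact: (map_f (subn^~ k) hx).
  + exact: (map_f (subn^~ k) hy).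
Qed.

Lemma tile_eq (b : PBlock U) Y lab : ptolemy_poly (pb_diag b) ->
  (forall x y, x < y <= pb_size b -> is_diag (pb_size b) x y -> Y x y = dgb b x y) ->
  mkseq lab (pb_size b) = val (pb_lab b) -> tile Y lab (pb_size b) = b.
Proof.
case: b => k L D /= [H1 _] HY HL; rewrite /tile.
have -> : [set p : 'I_k.+1 * 'I_k.+1 | is_diag k p.1 p.2 && Y p.1 p.2] = D.
  apply/setP => -[x y]; rewrite inE /=.
  case hd: (is_diag k x y) => /=.
  - rewrite HY //; last by move: hd; rewrite /is_diag => /and3P[-> _ _]; rewrite -ltnS ltn_ord.
    exact: (@dgbP (PBlockMk L D) x y).
  - by apply/esym/negbTE/negP => /H1 /=; rewrite hd.
congr PBlockMk; exact: val_inj.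
Qed.

Lemma mkseqD (f : nat -> U) m k : mkseq f (m + k) = mkseq f m ++ mkseq (fun i => f (i + m)) k.
Proof.
apply: (@eq_from_nth _ (f 0)); first by rewrite size_cat !size_mkseq.
move=> i; rewrite size_mkseq => hi; rewrite nth_cat size_mkseq nth_mkseq //.
case: (ltnP i m) => h; first by rewrite nth_mkseq.
rewrite nth_mkseq ?subnK //; lia.
Qed.

Lemma labs_cons b s : labs (b :: s) = val (pb_lab b) ++ labs s.
Proof. by []. Qed.

Lemma tile_lab Y lab k : val (pb_lab (tile Y lab k)) = mkseq lab k.
Proof. by []. Qed.

Lemma labs_BF Y lab W : labs (BF Y lab W) = mkseq lab W.
Proof.
move: {2}W (leqnn W) => m hm; elim: m W hm Y lab => [|m IH] W hm Y lab.
  by have -> : W = 0 by lia.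
case: (posnP W) => W0; first by subst W.
rewrite BF_unfold //.
have [k0 kW _ _] := nextcut_props Y W0.
set k := nextcut Y W in k0 kW *.
rewrite labs_cons tile_lab IH; last lia.
by rewrite -mkseqD subnKC.
Qed.

Lemma sz_BF Y lab W : sz (BF Y lab W) = W.
Proof. by rewrite sz_labs labs_BF size_mkseq. Qed.

Lemma BF_valid Y lab W : lin_arc Y W -> lin_pt Y W -> {in gtn W &, injective lab} ->
  forall b, List.In b (BF Y lab W) -> pblock_valid b.
Proof.
move: {2}W (leqnn W) => m hm; elim: m W hm Y lab => [|m IH] W hm Y lab ha hp hl b.
  by have -> : W = 0 by lia.
case: (posnP W) => W0; first by subst W.
rewrite BF_unfold //.
have [k0 kW _ _] := nextcut_props Y W0.
set k := nextcut Y W in k0 kW *.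
move=> /= [<-|hb]; last first.
  have [ha' hp'] := lin_sh kW ha hp.
  apply: (IH (W - k)) hb => //; first lia.
  move=> x y; rewrite !inE /shL => hx hy /hl; rewrite !inE => /(_ _ _) e.
  have := e ltac:(lia) ltac:(lia); lia.
split; first exact: k0.
- rewrite tile_lab /mkseq map_inj_in_uniq ?iota_uniq // => x y; rewrite !mem_iota !add0n => /andP[_ hx] /andP[_ hy].
  apply: hl; rewrite inE; lia.
- split => [p|p q]; first by rewrite !inE => /andP[].
  rewrite !inE => /andP[dp yp] /andP[dq yq] hc x y hx hy hd.
  rewrite inE hd /=.
  have hxy : x.+1 < y by move: hd; rewrite /is_diag => /and3P[].
  have pk : p.2 <= k by rewrite -ltnS ltn_ord.
  have qk : q.2 <= k by rewrite -ltnS ltn_ord.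
  have hx' := map_f val hx; have hy' := map_f val hy; rewrite /= in hx' hy'.
  case/orP: hc => /and3P[c1 c2 c3].
  + apply: (hp p.1 q.1 p.2 q.2) => //; lia.
  + apply: (hp q.1 p.1 q.2 p.2) => //; try lia.
    * by move: hx'; rewrite !inE; case/or4P => ->; rewrite ?orbT.
    * by move: hy'; rewrite !inE; case/or4P => ->; rewrite ?orbT.
Qed.

Lemma BF_Xlin_inv s u : (forall b, List.In b s -> bv b) -> BF (Xlin s) (nth u (labs s)) (sz s) = s.
Proof.
elim: s => [|blk s IH] hv //=.
have [k0 hpt] := hv _ (or_introl erefl).
have hv' : forall b, List.In b s -> bv b by move=> b hb; apply: hv; right.
set k := pb_size blk in k0 *.
rewrite BF_unfold szC; last by rewrite -/k; lia.
have hk : nextcut (Xlin (blk :: s)) (k + sz s) = k.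
  apply: nextcut_unique => //; first by rewrite leq_addr.
  - apply/cutYP => a b h1 h2 h3 /=; apply/negP => /orP[/and3P[_ hb _]|/andP[ha _]]; lia.
  - move=> v v0 vk; apply/negP => /cutYP /(_ 0 k v0 vk (leq_addr _ _)) /=.
    by rewrite /= -/k k0 leqnn eqxx /= (leq_ltn_trans v0 vk) orbT.
rewrite hk; congr cons.
- apply: tile_eq => //.
  + move=> x y /andP[hxy hy] hd /=; rewrite hxy hy -/k /=.
    rewrite (_ : k <= x = false) ?orbF; last by apply/negbTE; rewrite -ltnNge; lia.
    move: hd; rewrite /is_diag -/k => /and3P[_ _]; case: (x == 0) => /=; case: (y == k) => /=; by rewrite ?orbF.
  + rewrite /labs /=; apply: (@eq_from_nth _ u); first by rewrite size_mkseq size_tuple.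
    move=> i; rewrite size_mkseq => hi; rewrite nth_mkseq // nth_cat size_tuple -/k hi //.
- rewrite addKn; rewrite -[RHS](IH hv'); apply: BF_ext => [a b hab|i hi].
  + rewrite /shY /= (_ : a + k < b + k) /=; last lia.
    rewrite (_ : b + k <= k = false) /=; last by apply/negbTE; rewrite -ltnNge; lia.
    by rewrite leq_addl !addnK.
  + by rewrite /shL /labs /= nth_cat size_tuple -/k (_ : i + k < k = false) ?addnK //; apply/negbTE; rewrite -ltnNge; lia.
Qed.
End Lin.

Definition pdec (P : Prop) : bool := if excluded_middle_informative P then true else false.
Lemma pdecP P : pdec P = true <-> P.
Proof. by rewrite /pdec; case: excluded_middle_informative. Qed.
Lemma pdec_eq P Q : (P <-> Q) -> pdec P = pdec Q.
Proof. move=> h; rewrite /pdec; case: excluded_middle_informative => p; case: excluded_middle_informative => q //; exfalso; tauto. Qed.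

Local Open Scope ring_scope.

Section Res.
Variable n : nat.
Hypothesis hn : (0 < n)%N.

Lemma uq (a a' : nat) (t t' : int) : (a < n)%N -> (a' < n)%N ->
  a%:Z + t * n%:Z = a'%:Z + t' * n%:Z -> a = a' /\ t = t'.
Proof. move=> h2 h3 h.
  have ht : t = t'.
    case: (ltrgtP t t') => // htt.
    - have H0 : 0 <= t' - t - 1 by lia. have := mulr_ge0 H0 (ler0n _ n). nia.
    - have H0 : 0 <= t - t' - 1 by lia. have := mulr_ge0 H0 (ler0n _ n). nia.
  subst t'; split => //; lia.
Qed.

Definition res (z : int) : nat := `|(z %% n%:Z)%Z|%N.

Lemma res_ge z : 0 <= (z %% n%:Z)%Z.
Proof. by apply: modz_ge0; rewrite eqz_nat; lia. Qed.

Lemma res_lt z : (res z < n)%N.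
Proof.
have := ltz_pmod z (_ : 0 < n%:Z); rewrite /res -(gez0_abs (res_ge z)) ltz_nat; apply; lia.
Qed.

Lemma res_eq z : z = (res z)%:Z + (z %/ n%:Z)%Z * n%:Z.
Proof. by rewrite /res gez0_abs ?res_ge // addrC -divz_eq. Qed.

Lemma res_uniq z (a : nat) t : (a < n)%N -> z = a%:Z + t * n%:Z -> res z = a.
Proof.
move=> ha hz; have := res_eq z; rewrite {1}hz => /esym /uq.
by case/(_ (res_lt z) ha).
Qed.

Lemma res_shift z t : res (z + t * n%:Z) = res z.
Proof.
have := res_uniq (z := z + t * n%:Z) (t := divz z n%:Z + t) (res_lt z). apply.
by rewrite {1}(res_eq z) mulrDl addrA.
Qed.

Lemma res_nat (a : nat) : (a < n)%N -> res a%:Z = a.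
Proof. by move=> h; apply: (res_uniq (t := 0)) => //; rewrite mul0r addr0. Qed.
End Res.

Section Circ.
Variable U : finType.
Variable n : nat.
Hypothesis hn : (0 < n)%N.
Implicit Types (s : seq (PBlock U)).

Definition XofS s (e : int) : int -> int -> bool := fun i j =>
  pdec (exists (a : nat) (t : int), [/\ i = e + a%:Z + t * n%:Z, i < j & Xlin s a (a + absz (j - i))%N]).

Lemma XofS_elim s e i j : sz s = n -> XofS s e i j ->
  exists (a : nat) (t : int) (d : nat), [/\ i = e + a%:Z + t * n%:Z, j = i + d%:Z, (a < n)%N, (a + d <= n)%N & Xlin s a (a + d)].
Proof.
move=> hs /pdecP [a [t [h1 h2 h3]]]; exists a; exists t; exists (absz (j - i)).
have hb := Xlin_bound h3; split => //; try lia.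
Qed.

Lemma XofS_intro s e (a b : nat) t : Xlin s a b -> XofS s e (e + a%:Z + t * n%:Z) (e + b%:Z + t * n%:Z).
Proof.
move=> h; have hb := Xlin_bound h; apply/pdecP; exists a; exists t; split; first by [].
  lia.
have E : (e + b%:Z + t * n%:Z - (e + a%:Z + t * n%:Z) = Posz (b - a)%N)%R by lia.
by rewrite E /= subnKC //; lia.
Qed.

Lemma XofS_periodic s e : periodic n (XofS s e).
Proof.
move=> i j t; apply: pdec_eq; split => -[a [t' [h1 h2 h3]]].
- exists a, (t' - t); split; [lia|lia|]. by have -> : j - i = j + t * n%:Z - (i + t * n%:Z) by lia.
- exists a, (t' + t); split; [lia|lia|]. by have <- : j - i = j + t * n%:Z - (i + t * n%:Z) by lia.
Qed.

Lemma XofS_arc s e : sz s = n -> (forall b, List.In b s -> bv b) -> arc_collection (XofS s e).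
Proof.
move=> hs hv i j /(XofS_elim hs) [a [t [d [h1 h2 h3 h4 h5]]]].
have := Xlin_arc hv h5; rewrite /is_arc; lia.
Qed.

Lemma XofS_bounded s e : sz s = n -> arcs_bounded n (XofS s e).
Proof.
move=> hs i j /(XofS_elim hs) [a [t [d [h1 h2 h3 h4 h5]]]]; lia.
Qed.

Lemma XofS_ptolemy s e : sz s = n -> (forall b, List.In b s -> bv b) -> ptolemy_inf (XofS s e).
Proof.
move=> hs hv; split; first exact: XofS_arc.
move=> i j r l Xij Xrl hc hir.
have {hc} [c1 c2 c3] : [/\ i < r, r < j & j < l].
  by move: hc; rewrite /crossz => /orP[/and3P[]|/and3P[]] //; lia.
have [a [t [d [e1 e2 a1 a2 a3]]]] := XofS_elim hs Xij.
have [a' [t' [d' [f1 f2 b1 b2 b3]]]] := XofS_elim hs Xrl.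
set dr := absz (r - i).
have edr : r = i + dr%:Z by rewrite /dr gez0_abs; lia.
have [ea _] : a' = (a + dr)%N /\ t' = t.
  apply: (uq (n := n)) => //; first lia.
  have : e + a'%:Z + t' * n%:Z = e + (a + dr)%N%:Z + t * n%:Z by lia.
  lia.
subst a'.
have hpt := Xlin_pt (W := n) hv.
have Hx : forall x y : nat, x \in [:: a; a + d; a + dr; a + dr + d']%N -> y \in [:: a; a + d; a + dr; a + dr + d']%N ->
   (x.+1 < y)%N -> XofS s e (e + x%:Z + t * n%:Z) (e + y%:Z + t * n%:Z).
  move=> x y hx hy hxy; apply: XofS_intro.
  apply: (hpt a (a + dr) (a + d) (a + dr + d'))%N => //; lia.
split => harc.
- have -> : r = e + (a + dr)%N%:Z + t * n%:Z by lia.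
  rewrite e1; apply: Hx; rewrite ?inE ?eqxx ?orbT //; rewrite /is_arc in harc; lia.
- have -> : l = e + (a + dr + d')%N%:Z + t * n%:Z by lia.
  rewrite e1; apply: Hx; rewrite ?inE ?eqxx ?orbT //; rewrite /is_arc in harc; lia.
- have -> : r = e + (a + dr)%N%:Z + t * n%:Z by lia.
  have -> : j = e + (a + d)%N%:Z + t * n%:Z by lia.
  apply: Hx; rewrite ?inE ?eqxx ?orbT //; rewrite /is_arc in harc; lia.
- have -> : l = e + (a + dr + d')%N%:Z + t * n%:Z by lia.
  have -> : j = e + (a + d)%N%:Z + t * n%:Z by lia.
  apply: Hx; rewrite ?inE ?eqxx ?orbT //; rewrite /is_arc in harc; lia.
Qed.

Lemma res_natmod (m : nat) : res n m%:Z = (m %% n)%N.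
Proof.
apply: (res_uniq hn (t := (m %/ n)%N%:Z)); first by rewrite ltn_pmod.
by rewrite {1}(divn_eq m n) PoszD PoszM addrC.
Qed.

Definition eOf s (u : U) : int := - (index u (labs s))%:Z - 1.

Definition lamS (F : seq U) (u : U) : {ffun 'I_n -> U} :=
  [ffun r : 'I_n => nth u F ((r + index u F) %% n)].

Definition lamZ (lam : {ffun 'I_n -> U}) (z : int) : U := lam (Ordinal (res_lt hn z)).

Definition ord0n : 'I_n := Ordinal hn.

Lemma lamZ_shift lam z t : lamZ lam (z + t * n%:Z) = lamZ lam z.
Proof. by rewrite /lamZ; congr (lam _); apply: val_inj; rewrite /= res_shift. Qed.

Lemma lamS_inj F u : uniq F -> size F = n -> injective (lamS F u).
Proof.
move=> uF sF r r'; rewrite !ffunE => /eqP; rewrite nth_uniq ?sF ?ltn_pmod // => /eqP h.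
apply: val_inj; move: h => /eqP; rewrite eqn_modDr => /eqP.
by rewrite !modn_small.
Qed.

Lemma lamS_0 F u : u \in F -> size F = n -> lamS F u ord0n = u.
Proof.
move=> uF sF; rewrite ffunE /= add0n modn_small ?nth_index // -sF index_mem //.
Qed.

Definition cutX (X : int -> int -> bool) (c : int) : Prop := forall p q, X p q -> ~ (p < c < q).

Definition Yc (X : int -> int -> bool) (c : int) : nat -> nat -> bool := fun a b => X (c + a%:Z) (c + b%:Z).
Definition Lc (lam : {ffun 'I_n -> U}) (c : int) : nat -> U := fun i => lamZ lam (c + 1 + i%:Z).
Definition Gc X lam c := BF (Yc X c) (Lc lam c) n.

Lemma cp_facts (x : CPrep U) : let s := (proj1_sig x).1 in let u := (proj1_sig x).2 in
  #|U| = n -> [/\ forall b, List.In b s -> bv b, sz s = n, uniq (labs s) & u \in labs s].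
Proof.
case: x => [[s u] [H1 H2]] /= hU; split.
- by move=> b /H1 [h1 _ h3].
- by rewrite sz_labs (perm_size H2) -cardE hU.
- by rewrite (perm_uniq H2) enum_uniq.
- by rewrite (perm_mem H2) mem_enum.
Qed.

Lemma XofS_Y s e a b : sz s = n -> (a < b <= n)%N -> Yc (XofS s e) e a b = Xlin s a b.
Proof.
move=> hs hab; rewrite /Yc; apply/idP/idP.
- move/(XofS_elim hs) => [a' [t [d [h1 h2 h3 h4 h5]]]].
  have [ea et] : a = a' /\ 0 = t.
    by apply: (uq (n := n)); try lia; rewrite mul0r addr0; lia.
  subst a' t; have -> : b = (a + d)%N by lia. exact: h5.
- move=> h; have := XofS_intro e 0 h; by rewrite mul0r !addr0.
Qed.

Lemma XofS_L s u i : size (labs s) = n -> (i < n)%N -> Lc (lamS (labs s) u) (eOf s u) i = nth u (labs s) i.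
Proof.
move=> hs hi; rewrite /Lc /lamZ ffunE /=; congr nth.
set off := index u (labs s).
have E := res_eq hn (eOf s u + 1 + i%:Z).
rewrite -res_natmod; apply: (res_uniq hn (t := - divz (eOf s u + 1 + i%:Z) n%:Z)) => //.
move: E; rewrite /eOf -/off PoszD. set r := res n _. set q := divz _ _. lia.
Qed.

Lemma Gc_XofS s u : sz s = n -> size (labs s) = n -> (forall b, List.In b s -> bv b) ->
  Gc (XofS s (eOf s u)) (lamS (labs s) u) (eOf s u) = s.
Proof.
move=> hs hF hv; rewrite /Gc; rewrite -[RHS](BF_Xlin_inv u hv) hs; apply: BF_ext => [a b hab|i hi].
- exact: XofS_Y.
- exact: XofS_L.
Qed.

Lemma XofS_cut s e (w : nat) : sz s = n -> (w <= n)%N -> cutY (Xlin s) n w -> cutX (XofS s e) (e + w%:Z).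
Proof.
move=> hs hw /cutYP hc p q /(XofS_elim hs) [a [t [d [h1 h2 h3 h4 h5]]]] /andP[c1 c2].
case: (ltrgtP t 0) => ht.
- have H0 : 0 <= - t - 1 by lia. have := mulr_ge0 H0 (ler0n _ n). nia.
- have H0 : 0 <= t - 1 by lia. have := mulr_ge0 H0 (ler0n _ n). nia.
- subst t; suff : ~~ Xlin s a (a + d) by rewrite h5. apply: hc => //; lia.
Qed.

Lemma cutX_shift X c t : periodic n X -> cutX X c -> cutX X (c + t * n%:Z).
Proof.
move=> hP hc p q hX /andP[c1 c2]; apply: (hc (p + (- t) * n%:Z) (q + (- t) * n%:Z)).
- by rewrite hP.
- apply/andP; split; lia.
Qed.

Lemma cutX_Y X c (d W : nat) : cutX X (c + d%:Z) -> cutY (Yc X c) W d.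
Proof.
move=> hc; apply/cutYP => a b h1 h2 h3; apply/negP => hX; apply: (hc _ _ hX).
apply/andP; split; lia.
Qed.

Lemma Y_valid X c : ptolemy_inf X -> lin_arc (Yc X c) n /\ lin_pt (Yc X c) n.
Proof.
move=> [ha hp]; split.
- move=> a b _ /ha; rewrite /is_arc; lia.
- move=> i r j l h1 h2 h3 h4 Yij Yrl.
  have hc : crossz (c + i%:Z) (c + j%:Z) (c + r%:Z) (c + l%:Z).
    by rewrite /crossz; apply/orP; left; apply/and3P; split; lia.
  have hlt : c + i%:Z < c + r%:Z by lia.
  have [q1 q2 q3 q4] := hp _ _ _ _ Yij Yrl hc hlt.
  apply: four_pts => //; rewrite /Yc; try move=> h; [apply: q1|apply: q2|apply: q3|apply: q4]; rewrite /is_arc; lia.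
Qed.

Lemma Gc_shift X lam c t : periodic n X -> Gc X lam (c + t * n%:Z) = Gc X lam c.
Proof.
move=> hP; apply: BF_ext => [a b _|i _]; rewrite /Yc /Lc.
- have -> : c + t * n%:Z + a%:Z = c + a%:Z + t * n%:Z by lia.
  have -> : c + t * n%:Z + b%:Z = c + b%:Z + t * n%:Z by lia.
  by rewrite hP.
- have -> : c + t * n%:Z + 1 + i%:Z = c + 1 + i%:Z + t * n%:Z by lia.
  by rewrite lamZ_shift.
Qed.

Lemma Gc_rot X lam c (d : nat) : periodic n X -> cutX X c -> cutX X (c + d%:Z) -> (d <= n)%N ->
  exists B, Gc X lam c = BF (Yc X c) (Lc lam c) d ++ B /\ Gc X lam (c + d%:Z) = B ++ BF (Yc X c) (Lc lam c) d.
Proof.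
move=> hP hc hcd hd.
exists (BF (Yc X (c + d%:Z)) (Lc lam (c + d%:Z)) (n - d)); split.
- rewrite /Gc (BF_split _ hd (@cutX_Y X c d n hcd)); congr cat; apply: BF_ext => [a b _|i _]; rewrite /shY /shL /Yc /Lc.
  + by f_equal; lia.
  + by rewrite PoszD; congr lamZ; lia.
- have hn' : (n - d <= n)%N by lia.
  have hcn : cutX X (c + d%:Z + (n - d)%N%:Z).
    have -> : c + d%:Z + (n - d)%N%:Z = c + 1 * n%:Z by lia.
    exact: cutX_shift.
  rewrite /Gc (BF_split _ hn' (@cutX_Y X (c + d%:Z) (n - d) n hcn)) (_ : n - (n - d) = d)%N; last lia.
  congr cat; apply: BF_ext => [a b _|i _]; rewrite /shY /shL /Yc /Lc.
  + have -> : c + d%:Z + (a + (n - d))%N%:Z = c + a%:Z + 1 * n%:Z by lia.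
    have -> : c + d%:Z + (b + (n - d))%N%:Z = c + b%:Z + 1 * n%:Z by lia.
    by rewrite hP.
  + have -> : c + d%:Z + 1 + (i + (n - d))%N%:Z = c + 1 + i%:Z + 1 * n%:Z by lia.
    by rewrite lamZ_shift.
Qed.

Definition Xv (X : int -> int -> bool) := [/\ ptolemy_inf X, periodic n X & arcs_bounded n X].

Lemma cut_exists X : Xv X -> exists c, cutX X c.
Proof.
move=> [[ha hp] hP hB].
apply: NNPP => hno.
have ncut : forall c, exists p q, X p q /\ p < c < q.
  move=> c; apply: NNPP => h; apply: hno; exists c => p q hX hpq; apply: h; by exists p, q.
suff : forall L : nat, exists p q, X p q /\ (L%:Z <= q - p).
  move=> /(_ n.+1) [p [q [hX hL]]]; have := hB _ _ hX; lia.
elim => [|L [p [q [hX hL]]]].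
- have [p [q [hX _]]] := ncut 0; exists p, q; split => //; have := ha _ _ hX; rewrite /is_arc; lia.
- have [p' [q' [hX' /andP[h1 h2]]]] := ncut p.
  case: (lerP q q') => hqq.
  + exists p', q'; split => //; lia.
  + have hc : crossz p' q' p q by rewrite /crossz; apply/orP; left; apply/and3P; split; lia.
    have [_ H _ _] := hp _ _ _ _ hX' hX hc h1.
    exists p', q; split; last lia. apply: H; have := ha _ _ hX; rewrite /is_arc; lia.
Qed.

Lemma lab_hit (lam : {ffun 'I_n -> U}) c (r : 'I_n) : exists i, (i < n)%N /\ Lc lam c i = lam r.
Proof.
exists (res n (r%:Z - c - 1)); split; first exact: res_lt.
rewrite /Lc /lamZ; congr (lam _); apply: val_inj => /=.
have E := res_eq hn (r%:Z - c - 1).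
apply: (res_uniq hn (t := - divz (r%:Z - c - 1) n%:Z)); first exact: ltn_ord.
move: E; set i := res n _; set q := divz _ _; lia.
Qed.

Lemma lab_inj (lam : {ffun 'I_n -> U}) c : injective lam -> {in gtn n &, injective (Lc lam c)}.
Proof.
move=> hl i j; rewrite !inE => hi hj; rewrite /Lc /lamZ => /hl /(congr1 val) /= h.
have E1 := res_eq hn (c + 1 + i%:Z); have E2 := res_eq hn (c + 1 + j%:Z).
rewrite h in E1.
have [] := uq (n := n) (a := i) (a' := j) (t := - divz (c + 1 + i%:Z) n%:Z) (t' := - divz (c + 1 + j%:Z) n%:Z) hn hi hj.
  move: E1 E2; set r := res n _; set q1 := divz _ _; set q2 := divz _ _; lia.
by [].
Qed.

Lemma surj_facts X (lam : {ffun 'I_n -> U}) c : Xv X -> bijective lam -> cutX X c -> #|U| = n ->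
  [/\ cp_valid (Gc X lam c, lam ord0n), XofS (Gc X lam c) (eOf (Gc X lam c) (lam ord0n)) =2 X
    & lamS (labs (Gc X lam c)) (lam ord0n) = lam].
Proof.
move=> hX hbij hc hU.
have [[ha hp] hP hB] := hX.
have hlinj := bij_inj hbij.
set s := Gc X lam c; set u := lam ord0n.
have [hla hlp] := Y_valid c (conj ha hp).
have hF : labs s = mkseq (Lc lam c) n by rewrite labs_BF.
have hinj := @lab_inj lam c hlinj.
have uF : uniq (labs s) by rewrite hF map_inj_in_uniq ?iota_uniq // => x y; rewrite !mem_iota !add0n => /andP[_ ?] /andP[_ ?]; apply: hinj.
have szs : sz s = n by rewrite /s /Gc sz_BF.
have [i0 [hi0 e0]] := lab_hit lam c ord0n.
have idx : index u (labs s) = i0.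
  by rewrite /u -e0 hF -(nth_mkseq u (Lc lam c) hi0) index_uniq // ?size_mkseq // -hF.
have hq : exists q : int, c + 1 + i0%:Z = q * n%:Z.
  move: e0; rewrite /Lc /lamZ => /hlinj /(congr1 val) /= h0.
  exists (divz (c + 1 + i0%:Z) n%:Z); by rewrite {1}(res_eq hn (c + 1 + i0%:Z)) h0 add0r.
have [q hq'] := hq.
have eE : eOf s u = c - q * n%:Z by rewrite /eOf idx; lia.
have hXl : forall a b, (a < b <= n)%N -> Xlin s a b = X (c + a%:Z) (c + b%:Z).
  by move=> a b hab; rewrite /s /Gc BF_Xlin.
split.
- split.
  + apply: BF_valid => //.
  + apply: uniq_perm => //; first exact: enum_uniq.
    move=> y; rewrite mem_enum; case: hbij => g h1 h2.
    have [i [hi ei]] := lab_hit lam c (g y).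
    have -> : y \in labs s by rewrite hF -(h2 y) -ei; apply: map_f; rewrite mem_iota add0n hi.
    by [].
- move=> i j; rewrite eE; apply/idP/idP.
  + move/(XofS_elim szs) => [a [t [d [h1 h2 h3 h4 h5]]]].
    have := Xlin_bound h5 => hab; rewrite hXl // in h5; last lia.
    have -> : i = c + a%:Z + (t - q) * n%:Z by lia.
    have -> : j = c + (a + d)%N%:Z + (t - q) * n%:Z by lia.
    by rewrite hP.
  + move=> hXij; have := ha _ _ hXij; rewrite /is_arc => harc.
    set d := absz (j - i).
    have Ei := res_eq hn (i - (c - q * n%:Z)).
    set a := res n _ in Ei; set T := divz _ _ in Ei.
    have ha' : (a < n)%N by exact: res_lt.
    have Ei' : i = c + a%:Z + (T - q) * n%:Z by lia.
    have Ej' : j = c + (a + d)%N%:Z + (T - q) * n%:Z by rewrite /d; lia.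
    have Xa : X (c + a%:Z) (c + (a + d)%N%:Z) by rewrite -(hP _ _ (T - q)) -Ei' -Ej'.
    have had : (a + d <= n)%N.
      rewrite leqNgt; apply/negP => hbad.
      apply: (cutX_shift (t := 1) hP hc Xa); apply/andP; split; lia.
    have -> : i = c - q * n%:Z + a%:Z + T * n%:Z by lia.
    have -> : j = c - q * n%:Z + (a + d)%N%:Z + T * n%:Z by lia.
    apply: XofS_intro; rewrite hXl //; lia.
- apply/ffunP => r; rewrite ffunE idx hF nth_mkseq ?ltn_pmod //.
  rewrite /Lc /lamZ; congr (lam _); apply: val_inj => /=.
  apply: (res_uniq hn (t := q - ((r + i0) %/ n)%N%:Z)); first exact: ltn_ord.
  have := divn_eq (r + i0) n.
  set m := ((r + i0) %/ n)%N; set k := ((r + i0) %% n)%N. nia.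
Qed.
End Circ.

Close Scope ring_scope.

Lemma sz_cat (U : finType) (s1 s2 : seq (PBlock U)) : sz (s1 ++ s2) = (sz s1 + sz s2)%N.
Proof. by rewrite /sz map_cat sumn_cat. Qed.

Lemma labs_cat (U : finType) (s1 s2 : seq (PBlock U)) : labs (s1 ++ s2) = labs s1 ++ labs s2.
Proof. by rewrite /labs map_cat flatten_cat. Qed.

Lemma In_cat_l (T : Type) (s1 s2 : seq T) b : List.In b s1 -> List.In b (s1 ++ s2).
Proof. by move=> h; apply: List.in_or_app; left. Qed.

Lemma sig_eq (A : Type) (P : A -> Prop) (x y : {a : A | P a}) : sval x = sval y -> x = y.
Proof. apply: eq_sig_hprop => a p q; exact: proof_irrelevance. Qed.

Theorem mainTheorem8 (U : finType) (n : nat) (hn : 1 <= n) (hU : #|U| = n) :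
  exists f : CPrep U -> InfDiagram n * ResLabelling U n,
    (forall x y : CPrep U, f x = f y <-> cp_equiv x y) /\
    (forall z, exists x, f x = z).
Proof.
Local Open Scope ring_scope.
have hn' : (0 < n)%N := hn.
pose Xf (x : CPrep U) := XofS n (sval x).1 (eOf (sval x).1 (sval x).2).
pose Lf (x : CPrep U) := lamS n (labs (sval x).1) (sval x).2.
have pfX : forall x, Xv n (Xf x).
  move=> x; have [hv hs hu hm] := cp_facts x hU.
  split; [exact: XofS_ptolemy|exact: XofS_periodic|exact: XofS_bounded].
have pfL : forall x, bijective (Lf x).
  move=> x; have [hv hs hu hm] := cp_facts x hU.
  apply: inj_card_bij; first by apply: lamS_inj => //; rewrite -sz_labs.
  by rewrite card_ord hU.
pose f := fun x : CPrep U => (exist _ (Xf x) (pfX x) : InfDiagram n, exist _ (Lf x) (pfL x) : ResLabelling U n).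
have fE : forall x y, Xf x = Xf y -> Lf x = Lf y -> f x = f y.
  by move=> x y h1 h2; rewrite /f; congr pair; apply: sig_eq.
have key : forall (x : CPrep U) X (lam : {ffun 'I_n -> U}) c, Xv n X -> bijective lam -> cutX X c ->
    (sval x).1 = Gc hn' X lam c -> (sval x).2 = lam (ord0n hn') -> Xf x = X /\ Lf x = lam.
  move=> x X lam c hX hb hc e1 e2.
  have [_ h2 h3] := surj_facts hn' hX hb hc hU.
  split.
  - apply: functional_extensionality => i; apply: functional_extensionality => j.
    by rewrite /Xf e1 e2 h2.
  - by rewrite /Lf e1 e2 h3.
exists f; split; last first.
  move=> [[X hX] [lam hl]].
  have [c hc] := cut_exists hn' hX.
  have [hv _ _] := surj_facts hn' hX hl hc hU.
  exists (exist _ (Gc hn' X lam c, lam (ord0n hn')) hv).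
  have [e1 e2] := key (exist _ (Gc hn' X lam c, lam (ord0n hn')) hv) X lam c hX hl hc erefl erefl.
  by rewrite /f; congr pair; apply: sig_eq.
move=> x y; split.
- move=> hf.
  have hX : Xf x = Xf y by move: (congr1 (fun p => sval p.1) hf).
  have hL : Lf x = Lf y by move: (congr1 (fun p => sval p.2) hf).
  have [hvx hsx hux hmx] := cp_facts x hU.
  have [hvy hsy huy hmy] := cp_facts y hU.
  set sx := (sval x).1 in hvx hsx hux hmx *; set ux := (sval x).2 in hmx *.
  set sy := (sval y).1 in hvy hsy huy hmy *; set uy := (sval y).2 in hmy *.
  have eu : ux = uy.
    have e1 : Lf x (ord0n hn') = ux by apply: lamS_0 => //; rewrite -sz_labs.
    have e2 : Lf y (ord0n hn') = uy by apply: lamS_0 => //; rewrite -sz_labs.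
    by rewrite -e1 -e2 hL.
  set ex := eOf sx ux; set ey := eOf sy uy.
  have Gx : Gc hn' (Xf x) (Lf x) ex = sx by apply: Gc_XofS => //; rewrite -sz_labs.
  have Gy : Gc hn' (Xf x) (Lf x) ey = sy by rewrite hX hL; apply: Gc_XofS => //; rewrite -sz_labs.
  have cx : cutX (Xf x) ex by have := XofS_cut hn' (e := ex) hsx (leq0n n) (cutY0 _ _); rewrite addr0.
  have cy : cutX (Xf x) ey by rewrite hX; have := XofS_cut hn' (e := ey) hsy (leq0n n) (cutY0 _ _); rewrite addr0.
  have [hPx _ _] : [/\ periodic n (Xf x), True & True].
    by have [? ? ?] := pfX x; split.
  have Ed := res_eq hn' (ey - ex).
  set d := res n _ in Ed; set T := divz _ _ in Ed.
  have ey' : ey = ex + d%:Z + T * n%:Z by lia.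
  have cxd : cutX (Xf x) (ex + d%:Z).
    have := cutX_shift hn' (t := - T) hPx cy; rewrite ey'.
    by have -> : ex + d%:Z + T * n%:Z + - T * n%:Z = ex + d%:Z by lia.
  have [B [h1 h2]] := Gc_rot hn' (Lf x) hPx cx cxd (ltnW (res_lt hn' _)).
  split => //; exists (size (BF (Yc (Xf x) ex) (Lc hn' (Lf x) ex) d)).
  rewrite -/sx -/sy -Gx -Gy h1 rot_size_cat ey' Gc_shift // h2 //.
- move=> [eu [k hk]].
  have [hvx hsx hux hmx] := cp_facts x hU.
  set sx := (sval x).1 in hvx hsx hux hmx hk *; set ux := (sval x).2 in hmx eu *.
  case: (leqP (size sx) k) => hk'.
    have -> : y = x.
      apply: sig_eq; rewrite [sval y]surjective_pairing -hk -eu rot_oversize //.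
      by rewrite /sx /ux -surjective_pairing.
    by [].
  set s1 := take k sx; set s2 := drop k sx.
  have hcat : sx = s1 ++ s2 by rewrite cat_take_drop.
  have hv1 : forall b, List.In b s1 -> bv b by move=> b hb; apply: hvx; rewrite hcat; apply: In_cat_l.
  set w := sz s1.
  have hw : (w <= n)%N by rewrite -hsx hcat sz_cat leq_addr.
  have cw : cutY (Xlin sx) n w.
    apply/cutYP => a b h1 h2 h3; rewrite hcat Xlin_cat; apply/negP => /orP[/Xlin_bound|/andP[]]; rewrite -/w; lia.
  set ex := eOf sx ux.
  have [hPx _ _] : [/\ periodic n (Xf x), True & True].
    by have [? ? ?] := pfX x; split.
  have cx : cutX (Xf x) ex by have := XofS_cut hn' (e := ex) hsx (leq0n n) (cutY0 _ _); rewrite addr0.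
  have cxw : cutX (Xf x) (ex + w%:Z) := XofS_cut hn' hsx hw cw.
  have Gx : Gc hn' (Xf x) (Lf x) ex = sx by apply: Gc_XofS => //; rewrite -sz_labs.
  have [B [h1 h2]] := Gc_rot hn' (Lf x) hPx cx cxw hw.
  have hA : BF (Yc (Xf x) ex) (Lc hn' (Lf x) ex) w = s1.
    rewrite -[RHS](BF_Xlin_inv ux hv1); apply: BF_ext => [a b hab|i hi].
    - rewrite XofS_Y //; last lia.
      rewrite -/sx hcat Xlin_cat; case: (Xlin s1 a b) => //=; apply/negbTE; rewrite negb_and -ltnNge -/w; lia.
    - rewrite XofS_L //; last 2 first.
      + by rewrite -sz_labs.
      + lia.
      by rewrite -/sx -/ux hcat labs_cat nth_cat -sz_labs -/w hi.
  have hB : B = s2.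
    have := congr1 (drop (size s1)) (etrans (esym Gx) h1); rewrite hA drop_size_cat // => <-.
    by rewrite hcat drop_size_cat.
  have Gy : Gc hn' (Xf x) (Lf x) (ex + w%:Z) = (sval y).1 by rewrite h2 hB hA -hk.
  have hu : (sval y).2 = Lf x (ord0n hn').
    by rewrite -eu -/ux; symmetry; apply: lamS_0 => //; rewrite -sz_labs.
  have [e1 e2] := key y (Xf x) (Lf x) (ex + w%:Z) (pfX x) (pfL x) cxw (esym Gy) hu.
  by apply: fE.
Qed.
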